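(* For $\tau,t\in\mathbb{R}$ let $$\mu_0(\tau,t)=\int_{-\infty}^{\infty}\exp(-x^6+\tau x^4+tx^2)\,dx.$$ Then $$\mu_0(\tau,t)=\int_0^\infty s^{-1/2}\exp(-s^3+\tau s^2+ts)\,ds,$$ and $\varphi=\mu_0(\tau,t)$ satisfies $$\frac{\partial^3\varphi}{\partial t^3}-\tfrac23\tau\frac{\partial^2\varphi}{\partial t^2}-\tfrac13t\frac{\partial\varphi}{\partial t}-\tfrac16\varphi=0.$$ *)

(* Defs.v *)
From Stdlib Require Import Reals.
From Coquelicot Require Import Coquelicot.
Open Scope R_scope.

Definition mu0_integrand (tau t : R) (x : R) : R :=
  exp (- x ^ 6 + tau * x ^ 4 + t * x ^ 2).

Definition mu0 (tau t : R) : R :=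
  RInt_gen (mu0_integrand tau t) (Rbar_locally m_infty) (Rbar_locally p_infty).

Definition mu0_integrand' (tau t : R) (s : R) : R :=
  Rpower s (- (1 / 2)) * exp (- s ^ 3 + tau * s ^ 2 + t * s).

(* Main.v *)
Require Import Defs.
From Stdlib Require Import Reals Lra Lia Psatz FunctionalExtensionality.
From Coquelicot Require Import Coquelicot.
From Corelib Require Import ssreflect.
Open Scope R_scope.

Definition Fk (tau : R) (k : nat) (t x : R) : R :=
  x ^ (2 * k) * exp (- x ^ 6 + tau * x ^ 4 + t * x ^ 2).

Lemma Fk_cont tau k t x : continuous (Fk tau k t) x.
Proof. apply: ex_derive_continuous. unfold Fk. auto_derive. trivial. Qed.

Lemma Fk_ge0 tau k t x : 0 <= Fk tau k t x.
Proof. unfold Fk. apply Rmult_le_pos. rewrite pow_mult. apply pow_le. nra.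
 apply Rlt_le, exp_pos. Qed.

Lemma RInt_mono (f : R -> R) a b c d : (forall x, continuous f x) -> (forall x, 0 <= f x) ->
  a <= c -> c <= d -> d <= b -> RInt f c d <= RInt f a b.
Proof.
intros Hc Hp H1 H2 H3.
have ex : forall u v, ex_RInt f u v by (intros; apply: (@ex_RInt_continuous R_CompleteNormedModule); intros; apply Hc).
rewrite -(RInt_Chasles f a c b) // -(RInt_Chasles f c d b) //.
have h1 : 0 <= RInt f a c by apply RInt_ge_0 => //; intros; apply Hp.
have h2 : 0 <= RInt f d b by apply RInt_ge_0 => //; intros; apply Hp.
rewrite /plus /=. lra.
Qed.

Lemma exR (f : R -> R) : (forall x, continuous f x) -> forall u v, ex_RInt f u v.
Proof. intros Hc u v; apply: (@ex_RInt_continuous R_CompleteNormedModule); intros; apply Hc. Qed.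

Lemma gen_nonneg (f : R -> R) (K : R) :
 (forall x, continuous f x) -> (forall x, 0 <= f x) ->
 (forall b, 0 <= b -> RInt f (-b) b <= K) ->
 exists l, (forall a b, a <= b -> RInt f a b <= l) /\
   (forall eps, 0 < eps -> exists D, 0 <= D /\ forall a b, a <= -D -> D <= b -> l - eps < RInt f a b).
Proof.
intros Hc Hp HK.
set E := fun y => exists b, 0 <= b /\ y = RInt f (-b) b.
have HE1 : bound E. { exists K. intros y [b [hb ->]]. by apply HK. }
have HE2 : exists y, E y. { exists (RInt f (-0) 0). exists 0. split; [lra|done]. }
destruct (completeness E HE1 HE2) as [l [Hub Hlub]].
exists l; split.
- intros a b hab. set M := Rmax (Rabs a) (Rabs b).
  apply Rle_trans with (RInt f (-M) M).
  + apply RInt_mono => //.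
    * have := Rmax_l (Rabs a) (Rabs b). have := Rabs_pos a. have := Rabs_pos b.
      unfold M. have := Rabs_le_between' a a 0. split_Rabs; lra.
    * have := Rmax_r (Rabs a) (Rabs b). unfold M. split_Rabs; lra.
  + apply Hub. exists M. split => //. unfold M. have := Rmax_l (Rabs a) (Rabs b). have := Rabs_pos a. lra.
- intros eps heps.
  destruct (Rlt_or_le (l - eps) l) as [_|]; [|lra].
  have : ~ is_upper_bound E (l - eps). { intro H. have := Hlub _ H. lra. }
  intro Hn.
  apply Classical_Prop.NNPP. intro Hno. apply Hn. intros y [b [hb ->]].
  apply Rnot_lt_le. intro hlt. apply Hno. exists b. split => //.
  intros a c ha hc. apply Rlt_le_trans with (RInt f (-b) b) => //.
  apply RInt_mono => //; lra.
Qed.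

Lemma gen_is (f : R -> R) l : (forall x, continuous f x) ->
  (forall eps, 0 < eps -> exists D, 0 <= D /\ forall a b, a <= -D -> D <= b -> Rabs (RInt f a b - l) < eps) ->
  is_RInt_gen f (Rbar_locally m_infty) (Rbar_locally p_infty) l.
Proof.
intros Hc H P [eps HP].
destruct (H eps (cond_pos eps)) as [D [hD HD]].
apply Filter_prod with (fun a => a < -D) (fun b => D < b).
- exists (-D). done.
- exists D. done.
- intros a b ha hb. exists (RInt f a b). split.
  + apply: RInt_correct. by apply exR.
  + apply HP. simpl. rewrite /ball /= /AbsRing_ball /abs /minus /plus /opp /=.
    apply HD; simpl; lra.
Qed.

Lemma poly3_bound A u : 0 <= A -> 0 <= u -> -u^3 + A*u^2 + A*u <= 2*(A+1)^3.
Proof.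
intros hA hu. destruct (Rle_or_lt u (A+1)).
- assert (u^2 <= (A+1)^2) by nra. assert (u^3 >= 0) by nra. nra.
- assert (-u^2 + A*u + A <= 0) by nra. assert (u*(-u^2 + A*u + A) <= 0) by nra.
  assert ( 0 <= (A+1)^3) by (apply pow_le; lra). nra.
Qed.

Lemma exp_pow_n a n : exp a ^ n = exp (INR n * a).
Proof.
induction n as [|n IH]; simpl. rewrite Rmult_0_l exp_0 //.
rewrite IH -exp_plus. f_equal. destruct n; simpl; ring.
Qed.

Lemma upow_exp u n : 0 <= u -> u ^ n <= INR n ^ n * exp u.
Proof.
intros hu. destruct n as [|n].
- simpl. have := exp_ineq1_le u. lra.
- set m := INR (S n). have hm : 0 < m by apply lt_0_INR; lia.
  have h1 : u / m <= exp (u / m) by (have := exp_ineq1_le (u/m); lra).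
  have h2 : (u/m)^(S n) <= exp (u/m) ^ (S n).
  { apply pow_incr. split => //. apply Rmult_le_pos => //. apply Rlt_le, Rinv_0_lt_compat => //. }
  rewrite exp_pow_n -/m in h2.
  replace (m * (u/m)) with u in h2 by (field; lra).
  replace (u ^ S n) with (m ^ S n * (u/m)^ S n).
  + apply Rmult_le_compat_l => //. apply pow_le; lra.
  + rewrite -Rpow_mult_distr. f_equal. field. lra.
Qed.

Lemma Fk_bound tau k T : exists C, 0 <= C /\ forall t x, t <= T -> Fk tau k t x <= C.
Proof.
set A := Rabs tau + Rabs T + 1.
have hA : 0 <= A by (unfold A; have := Rabs_pos tau; have := Rabs_pos T; lra).
exists (INR k ^ k * exp (2*(A+1)^3)). split.
{ apply Rmult_le_pos. apply pow_le, pos_INR. apply Rlt_le, exp_pos. }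
intros t x ht. unfold Fk.
replace (x^(2*k)) with ((x^2)^k) by (rewrite pow_mult //).
replace (- x ^ 6 + tau * x ^ 4 + t * x ^ 2) with ((- (x^2)^3 + tau*(x^2)^2 + (t+1)*(x^2)) + - (x^2)) by ring.
set u := x^2.
have hu : 0 <= u by (unfold u; nra).
rewrite exp_plus.
have e1 : - u^3 + tau*u^2 + (t+1)*u <= 2*(A+1)^3.
{ apply Rle_trans with (-u^3 + A*u^2 + A*u); [|by apply poly3_bound].
  have : tau * u^2 <= A * u^2. { apply Rmult_le_compat_r. nra. unfold A. have := Rle_abs tau; have := Rabs_pos T; lra. }
  have : (t+1) * u <= A * u. { apply Rmult_le_compat_r => //. unfold A. have := Rle_abs T; have := Rabs_pos tau; lra. }
  lra. }
have e2 : exp (- u^3 + tau*u^2 + (t+1)*u) <= exp (2*(A+1)^3).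
{ destruct (Req_dec (- u^3 + tau*u^2 + (t+1)*u) (2*(A+1)^3)) as [->|]; [lra|]. apply Rlt_le, exp_increasing. lra. }
have e3 : u^k * exp (-u) <= INR k ^ k.
{ have := upow_exp u k hu. have := exp_pos u. intros hp h.
  replace (INR k ^ k) with (INR k ^ k * exp u * exp (-u)).
  - apply Rmult_le_compat_r => //. apply Rlt_le, exp_pos.
  - rewrite Rmult_assoc -exp_plus Rplus_opp_r exp_0. ring. }
have := exp_pos (-u). have := exp_pos (- u^3 + tau*u^2 + (t+1)*u).
have : 0 <= u^k by apply pow_le.
intros h0 h1 h2.
replace (u ^ k * (exp (- u ^ 3 + tau * u ^ 2 + (t + 1) * u) * exp (- u))) with
  ((u^k * exp (-u)) * exp (- u ^ 3 + tau * u ^ 2 + (t + 1) * u)) by ring.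
apply Rmult_le_compat => //. apply Rmult_le_pos => //; lra. lra.
Qed.

Lemma Fk_S tau k t x : Fk tau (S k) t x = x^2 * Fk tau k t x.
Proof. unfold Fk. rewrite Nat.mul_succ_r pow_add. ring. Qed.

Lemma Fk_bound2 tau k T : exists D, 0 <= D /\ forall t x, t <= T -> Fk tau k t x * (1 + x^2) <= D.
Proof.
destruct (Fk_bound tau k T) as [C1 [h1 H1]].
destruct (Fk_bound tau (S k) T) as [C2 [h2 H2]].
exists (C1 + C2). split; [lra|]. intros t x ht.
have := H1 t x ht. have := H2 t x ht. rewrite Fk_S. intros. nra.
Qed.

Lemma atan_int b : is_RInt (fun x => / (1 + x^2)) (-b) b (atan b - atan (-b)).
Proof.
apply: (is_RInt_derive atan (fun x => / (1 + x^2))).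
- intros x _. apply is_derive_Reals. apply derivable_pt_lim_atan.
- intros x _. apply: ex_derive_continuous. auto_derive. nra.
Qed.

Lemma Fk_int_bound tau k T : exists K, forall t b, t <= T -> 0 <= b -> RInt (Fk tau k t) (-b) b <= K.
Proof.
destruct (Fk_bound2 tau k T) as [D [hD HD]].
exists (D * PI). intros t b ht hb.
apply Rle_trans with (RInt (fun x => D * / (1 + x^2)) (-b) b).
- apply RInt_le. lra. apply exR, Fk_cont.
  + apply exR. intros x. apply: ex_derive_continuous. auto_derive. nra.
  + intros x _. have := HD t x ht. have : 0 < 1 + x^2 by nra. intros hx H.
    apply Rmult_le_reg_r with (1 + x^2) => //. rewrite Rmult_assoc Rinv_l; lra.
- have := is_RInt_scal _ _ _ D _ (atan_int b). intro H.
  rewrite (is_RInt_unique _ _ _ _ H) /scal /= /mult /=.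
  have := atan_bound b. have := atan_bound (-b). intros. 
  have : atan b - atan (-b) <= PI by lra. intro. nra.
Qed.

Definition G tau k t := RInt_gen (Fk tau k t) (Rbar_locally m_infty) (Rbar_locally p_infty).

Lemma G_prop tau k t :
  (forall a b, a <= b -> RInt (Fk tau k t) a b <= G tau k t) /\
  (forall eps, 0 < eps -> exists D, 0 <= D /\ forall a b, a <= -D -> D <= b ->
      Rabs (RInt (Fk tau k t) a b - G tau k t) < eps) /\
  is_RInt_gen (Fk tau k t) (Rbar_locally m_infty) (Rbar_locally p_infty) (G tau k t).
Proof.
destruct (Fk_int_bound tau k t) as [K HK].
destruct (gen_nonneg (Fk tau k t) K (Fk_cont tau k t) (Fk_ge0 tau k t)) as [l [H1 H2]].
{ intros b hb. apply HK => //. lra. }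
have H3 : forall eps, 0 < eps -> exists D, 0 <= D /\ forall a b, a <= -D -> D <= b ->
      Rabs (RInt (Fk tau k t) a b - l) < eps.
{ intros eps he. destruct (H2 eps he) as [D [hD HD]]. exists D. split => //.
  intros a b ha hb. have := HD a b ha hb. have := H1 a b ltac:(lra). intros.
  apply Rabs_def1; lra. }
have H4 := gen_is _ _ (Fk_cont tau k t) H3.
have -> : G tau k t = l by exact: (@is_RInt_gen_unique R_CompleteNormedModule _ _ (Proper_StrongProper _ (Rbar_locally_filter m_infty)) (Proper_StrongProper _ (Rbar_locally_filter p_infty)) _ _ H4).
split => //. all: try (split => //).
Qed.

Lemma G_approx tau k t eps : 0 < eps -> exists D, 0 <= D /\ forall d, D <= d ->
  Rabs (RInt (Fk tau k t) (-d) d - G tau k t) < eps.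
Proof.
intros he. destruct (G_prop tau k t) as [_ [H _]]. destruct (H eps he) as [D [hD HD]].
exists D. split => //. intros d hd. apply HD; lra.
Qed.

Lemma G_ge0 tau k t : 0 <= G tau k t.
Proof.
destruct (G_prop tau k t) as [H _]. apply Rle_trans with (RInt (Fk tau k t) 0 0).
rewrite RInt_point. right; reflexivity. apply H; lra.
Qed.

Lemma exp_taylor y : Rabs (exp y - 1 - y) <= y^2 * exp (Rabs y).
Proof.
have e1 := exp_ineq1_le y. have e2 := exp_ineq1_le (-y).
have e3 : exp y * exp (-y) = 1 by rewrite -exp_plus Rplus_opp_r exp_0.
have p1 := exp_pos y. have p2 := exp_pos (-y).
destruct (Rle_or_lt 0 y) as [hy|hy].
- rewrite Rabs_right; [|lra]. rewrite Rabs_right; [|lra].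
  have : exp y - 1 <= y * exp y by nra. intro. nra.
- rewrite Rabs_right; [|lra]. rewrite Rabs_left; [|lra].
  have : 1 <= exp (-y) by lra. intro. nra.
Qed.

Lemma Fk_diff tau k t d x : Rabs d <= 1 ->
  Rabs (Fk tau k (t+d) x - Fk tau k t x - d * Fk tau (S k) t x) <= d^2 * Fk tau (S (S k)) (t+1) x.
Proof.
intros hd. rewrite !Fk_S.
have E1 : Fk tau k (t+d) x = Fk tau k t x * exp (d * x^2).
{ unfold Fk. rewrite Rmult_assoc -exp_plus. f_equal. f_equal. ring. }
have E2 : Fk tau k (t+1) x = Fk tau k t x * exp (x^2).
{ unfold Fk. rewrite Rmult_assoc -exp_plus. f_equal. f_equal. ring. }
rewrite E1 E2.
replace (Fk tau k t x * exp (d * x ^ 2) - Fk tau k t x - d * (x ^ 2 * Fk tau k t x))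
  with (Fk tau k t x * (exp (d * x^2) - 1 - d * x^2)) by ring.
have hF := Fk_ge0 tau k t x.
rewrite Rabs_mult (Rabs_right (Fk tau k t x)); [|lra].
have T := exp_taylor (d * x^2).
have hx : 0 <= x^2 by nra.
have : exp (Rabs (d * x^2)) <= exp (x^2).
{ rewrite Rabs_mult (Rabs_right (x^2)); [|lra].
  destruct (Req_dec (Rabs d * x^2) (x^2)) as [->|]; [lra|]. apply Rlt_le, exp_increasing.
  have : Rabs d * x^2 <= x^2 by nra. lra. }
intro H.
apply Rle_trans with (Fk tau k t x * ((d * x ^ 2) ^ 2 * exp (Rabs (d * x ^ 2)))).
{ apply Rmult_le_compat_l => //. }
have := exp_pos (Rabs (d * x ^ 2)). intro.
have : 0 <= (d * x^2)^2 by nra. intro.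
replace (d ^ 2 * (x ^ 2 * (x ^ 2 * (Fk tau k t x * exp (x ^ 2))))) with
  (Fk tau k t x * ((d * x ^ 2) ^ 2 * exp (x^2))) by ring.
apply Rmult_le_compat_l => //. apply Rmult_le_compat_l => //.
Qed.

Lemma RInt_lc (f g : R -> R) al be a b : (forall x, continuous f x) -> (forall x, continuous g x) ->
  RInt (fun x => al * f x + be * g x) a b = al * RInt f a b + be * RInt g a b.
Proof.
intros Hf Hg.
have H1 := RInt_correct _ _ _ (exR f Hf a b).
have H2 := RInt_correct _ _ _ (exR g Hg a b).
have H := is_RInt_plus _ _ _ _ _ _ (is_RInt_scal _ _ _ al _ H1) (is_RInt_scal _ _ _ be _ H2).
apply is_RInt_unique. exact H.
Qed.

Lemma RInt_abs_bound (f g : R -> R) a b : a <= b -> (forall x, continuous f x) -> (forall x, continuous g x) ->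
  (forall x, Rabs (f x) <= g x) -> Rabs (RInt f a b) <= RInt g a b.
Proof.
intros hab Hf Hg H.
have h1 : RInt f a b <= RInt g a b.
{ apply RInt_le => //; try apply exR => //. intros x _. have := H x. have := Rle_abs (f x). lra. }
have h2 : RInt (fun x => -1 * g x + 0 * g x) a b <= RInt f a b.
{ apply RInt_le => //; try apply exR => //.
  - intro x. apply: (continuous_ext (fun x => -1 * g x + 0 * g x)). intros; reflexivity.
    apply: continuous_plus; apply: continuous_mult; try apply continuous_const; apply Hg.
  - intros x _. have := H x. have := Rabs_le_between' (f x) 0 (g x). split_Rabs; lra. }
rewrite RInt_lc in h2 => //.
apply Rabs_le. lra.
Qed.

Ltac cont_tac := intros; apply: ex_derive_continuous; unfold Fk; auto_derive; trivial.

Lemma le_eps x y : (forall eta, 0 < eta -> x <= y + eta) -> x <= y.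
Proof. intros H. apply Rnot_lt_le. intro h. have := H ((x - y)/2) ltac:(lra). lra. Qed.

Lemma G_diff tau k t h : Rabs h <= 1 ->
  Rabs (G tau k (t+h) - G tau k t - h * G tau (S k) t) <= h^2 * G tau (S (S k)) (t+1).
Proof.
intros hh. apply le_eps. intros eta he.
destruct (G_approx tau k (t+h) (eta/3)) as [D1 [hD1 HD1]]; [lra|].
destruct (G_approx tau k t (eta/3)) as [D2 [hD2 HD2]]; [lra|].
destruct (G_approx tau (S k) t (eta/3)) as [D3 [hD3 HD3]]; [lra|].
set d := Rmax D1 (Rmax D2 D3).
have hd1 : D1 <= d by apply Rmax_l.
have hd2 : D2 <= d by (apply Rle_trans with (Rmax D2 D3); [apply Rmax_l| apply Rmax_r]).
have hd3 : D3 <= d by (apply Rle_trans with (Rmax D2 D3); [apply Rmax_r| apply Rmax_r]).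
have A1 := HD1 d hd1. have A2 := HD2 d hd2. have A3 := HD3 d hd3.
set I1 := RInt (Fk tau k (t+h)) (-d) d in A1.
set I2 := RInt (Fk tau k t) (-d) d in A2.
set I3 := RInt (Fk tau (S k) t) (-d) d in A3.
have EI : I1 - I2 - h * I3 = RInt (fun x => 1 * (1 * Fk tau k (t+h) x + (-1) * Fk tau k t x) + (-h) * Fk tau (S k) t x) (-d) d.
{ rewrite RInt_lc; [|cont_tac|cont_tac]. rewrite RInt_lc; [|cont_tac|cont_tac]. unfold I1, I2, I3. ring. }
have B : Rabs (I1 - I2 - h * I3) <= h^2 * G tau (S (S k)) (t+1).
{ rewrite EI.
  apply Rle_trans with (RInt (fun x => h^2 * Fk tau (S (S k)) (t+1) x + 0 * Fk tau (S (S k)) (t+1) x) (-d) d).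
  - apply RInt_abs_bound; [lra|cont_tac|cont_tac|].
    intros x. have := Fk_diff tau k t h x hh. 
    replace (1 * (1 * Fk tau k (t + h) x + -1 * Fk tau k t x) + - h * Fk tau (S k) t x) with
      (Fk tau k (t + h) x - Fk tau k t x - h * Fk tau (S k) t x) by ring. lra.
  - rewrite RInt_lc; [|cont_tac|cont_tac]. rewrite Rmult_0_l Rplus_0_r.
    apply Rmult_le_compat_l. nra. destruct (G_prop tau (S (S k)) (t+1)) as [H _]. apply H. lra. }
have : Rabs (h * (I3 - G tau (S k) t)) <= eta / 3.
{ rewrite Rabs_mult. have := Rabs_pos (I3 - G tau (S k) t). have := Rabs_pos h. nra. }
intro C.
revert A1 A2 B C. set g1 := G tau k (t+h). set g2 := G tau k t. set g3 := G tau (S k) t.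
intros. split_Rabs; nra.
Qed.

Lemma G_deriv tau k t : is_derive (G tau k) t (G tau (S k) t).
Proof.
apply is_derive_Reals. intros eps he.
set K := G tau (S (S k)) (t+1). have hK : 0 <= K by apply G_ge0.
have hpos : 0 < Rmin 1 (eps / (K+1)).
{ apply Rmin_pos. lra. apply Rdiv_lt_0_compat; lra. }
exists (mkposreal _ hpos). intros h hn hlt. simpl in hlt.
have h1 : Rabs h <= 1 by (have := Rmin_l 1 (eps/(K+1)); lra).
have h2 : Rabs h < eps / (K+1) by (have := Rmin_r 1 (eps/(K+1)); lra).
have D := G_diff tau k t h h1. fold K in D.
have ha : 0 < Rabs h by apply Rabs_pos_lt.
replace ((G tau k (t + h) - G tau k t) / h - G tau (S k) t) with
  ((G tau k (t + h) - G tau k t - h * G tau (S k) t) / h) by (field; auto).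
rewrite Rabs_div //.
apply Rmult_lt_reg_r with (Rabs h) => //. rewrite /Rdiv Rmult_assoc Rinv_l; [|lra]. rewrite Rmult_1_r.
have : h^2 = Rabs h * Rabs h by (rewrite -Rabs_mult; rewrite Rabs_right; [ring|nra]).
intro E. rewrite E in D.
have : Rabs h * K < eps.
{ apply Rle_lt_trans with (Rabs h * (K+1)). nra.
  apply Rmult_lt_reg_r with (/(K+1)). apply Rinv_0_lt_compat; lra.
  rewrite Rmult_assoc Rinv_r; lra. }
nra.
Qed.

Lemma G_Dn tau n t : Derive_n (G tau 0) n t = G tau n t.
Proof.
revert t. induction n as [|n IH]; intro t. done.
simpl. rewrite (Derive_ext _ (G tau n)) //. apply is_derive_unique, G_deriv.
Qed.

Lemma G_exn tau n t : ex_derive_n (G tau 0) n t.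
Proof.
destruct n as [|n]. done. simpl.
apply: (ex_derive_ext (G tau n)). intros; by rewrite G_Dn.
eexists. apply G_deriv.
Qed.

Definition phi tau t x := x * exp (- x ^ 6 + tau * x ^ 4 + t * x ^ 2).
Definition dphi tau t x := 1 * (1 * (1 * Fk tau 0 t x + (-6) * Fk tau 3 t x) + (4 * tau) * Fk tau 2 t x) + (2 * t) * Fk tau 1 t x.

Lemma phi_deriv tau t x : is_derive (phi tau t) x (dphi tau t x).
Proof. unfold phi, dphi. auto_derive. trivial. unfold Fk. simpl. ring. Qed.

Lemma phi_small tau t eta : 0 < eta -> exists D, forall d, D <= Rabs d -> Rabs (phi tau t d) <= eta.
Proof.
intros he.
destruct (Fk_bound2 tau 0 t) as [D0 [h0 H0]].
destruct (Fk_bound2 tau 1 t) as [D1 [h1 H1]].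
exists ((D0 + D1)/eta + 1). intros d hd.
have := H0 t d (Rle_refl _). have := H1 t d (Rle_refl _). rewrite Fk_S. intros A1 A0.
have hF := Fk_ge0 tau 0 t d.
have E : Rabs (phi tau t d) = Rabs d * Fk tau 0 t d.
{ unfold phi, Fk. rewrite Rabs_mult. simpl. rewrite Rmult_1_l. rewrite (Rabs_right (exp _)) //. apply Rle_ge, Rlt_le, exp_pos. }
rewrite E.
have hq : 0 <= (D0 + D1)/eta by (apply Rdiv_le_0_compat; lra).
have hd' : (D0 + D1) <= eta * Rabs d.
{ have : (D0 + D1) = eta * ((D0 + D1)/eta) by (field; lra). nra. }
have hr : Rabs d <= 1 + d^2.
{ have : d^2 = Rabs d * Rabs d by (rewrite -Rabs_mult; rewrite Rabs_right; [ring|nra]). nra. }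
have hpos : 0 < Rabs d by lra.
have e2 : Rabs d * Rabs d = d^2 by (rewrite -Rabs_mult; rewrite Rabs_right; [ring|nra]).
have e3 : d^2 * Fk tau 0 t d <= D1.
{ apply Rle_trans with (d ^ 2 * Fk tau 0 t d * (1 + d ^ 2)) => //.
  have : 0 <= d^2 * Fk tau 0 t d by (apply Rmult_le_pos; nra). nra. }
have e4 : Rabs d * (Rabs d * Fk tau 0 t d) <= eta * Rabs d.
{ rewrite -Rmult_assoc e2. have : 0 <= Fk tau 0 t d * (1 + d^2) by (apply Rmult_le_pos; nra). lra. }
apply Rmult_le_reg_l with (Rabs d) => //. lra.
Qed.

Lemma abs_lin a0 a3 b2 b1 p1 p2 : Rabs (- a0 + 6*a3 - 4*b2 - 2*b1 + (p1 - p2)) <=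
  Rabs a0 + 6*Rabs a3 + 4*Rabs b2 + 2*Rabs b1 + Rabs p1 + Rabs p2.
Proof.
eapply Rle_trans. apply Rabs_triang. rewrite Rabs_minus_sym.
have := Rabs_triang_inv p2 p1. intro h1. 
eapply Rle_trans. apply Rplus_le_compat_l. apply Rabs_triang.
rewrite Rabs_Ropp Rabs_minus_sym.
eapply Rle_trans. apply Rplus_le_compat_r. apply Rabs_triang.
rewrite Rabs_Ropp Rabs_mult (Rabs_right 2); [|lra].
eapply Rle_trans. apply Rplus_le_compat_r. apply Rplus_le_compat_r. apply Rabs_triang.
rewrite Rabs_Ropp Rabs_mult (Rabs_right 4); [|lra].
eapply Rle_trans. apply Rplus_le_compat_r. apply Rplus_le_compat_r. apply Rplus_le_compat_r. apply Rabs_triang.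
rewrite Rabs_Ropp Rabs_mult (Rabs_right 6); [|lra].
lra.
Qed.

Lemma G_comb tau t : G tau 0 t - 6 * G tau 3 t + 4 * tau * G tau 2 t + 2 * t * G tau 1 t = 0.
Proof.
set X := G tau 0 t - 6 * G tau 3 t + 4 * tau * G tau 2 t + 2 * t * G tau 1 t.
set c := 9 + 4 * Rabs tau + 2 * Rabs t.
have hc : 0 < c by (unfold c; have := Rabs_pos tau; have := Rabs_pos t; lra).
suff : forall eta, 0 < eta -> Rabs X <= c * eta.
{ intros H. have : Rabs X <= 0.
  { apply le_eps. intros eta he. rewrite Rplus_0_l.
    have := H (eta / c) ltac:(apply Rdiv_lt_0_compat; lra).
    replace (c * (eta / c)) with eta by (field; lra). done. }
  have := Rabs_pos X. intros. apply Rabs_eq_0. lra. }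
intros eta he.
destruct (G_approx tau 0 t eta he) as [D0 [hD0 HD0]].
destruct (G_approx tau 1 t eta he) as [D1 [hD1 HD1]].
destruct (G_approx tau 2 t eta he) as [D2 [hD2 HD2]].
destruct (G_approx tau 3 t eta he) as [D3 [hD3 HD3]].
destruct (phi_small tau t eta he) as [D4 HD4].
set d := Rmax (Rmax D0 D1) (Rmax (Rmax D2 D3) (Rabs D4)).
have hd0 : D0 <= d by (unfold d; apply Rle_trans with (Rmax D0 D1); apply Rmax_l).
have hd1 : D1 <= d by (unfold d; apply Rle_trans with (Rmax D0 D1); [apply Rmax_r|apply Rmax_l]).
have hd2 : D2 <= d by (unfold d; apply Rle_trans with (Rmax (Rmax D2 D3) (Rabs D4)); [apply Rle_trans with (Rmax D2 D3); apply Rmax_l|apply Rmax_r]).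
have hd3 : D3 <= d by (unfold d; apply Rle_trans with (Rmax (Rmax D2 D3) (Rabs D4)); [apply Rle_trans with (Rmax D2 D3); [apply Rmax_r|apply Rmax_l]|apply Rmax_r]).
have hd4 : Rabs D4 <= d by (unfold d; apply Rle_trans with (Rmax (Rmax D2 D3) (Rabs D4)); apply Rmax_r).
have dpos : 0 <= d by lra.
have P1 : Rabs (phi tau t d) <= eta by (apply HD4; rewrite Rabs_right; [have := Rle_abs D4; lra|lra]).
have P2 : Rabs (phi tau t (-d)) <= eta by (apply HD4; rewrite Rabs_Ropp Rabs_right; [have := Rle_abs D4; lra|lra]).
have A0 := HD0 d hd0. have A1 := HD1 d hd1. have A2 := HD2 d hd2. have A3 := HD3 d hd3.
have I : RInt (dphi tau t) (-d) d = phi tau t d - phi tau t (-d).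
{ apply is_RInt_unique. apply: (is_RInt_derive (phi tau t)).
  - intros; apply phi_deriv.
  - unfold dphi. cont_tac. }
have I' : RInt (dphi tau t) (-d) d = 
   1 * (1 * (1 * RInt (Fk tau 0 t) (-d) d + (-6) * RInt (Fk tau 3 t) (-d) d) + (4 * tau) * RInt (Fk tau 2 t) (-d) d) + (2 * t) * RInt (Fk tau 1 t) (-d) d.
{ unfold dphi. rewrite RInt_lc; [|cont_tac|cont_tac]. rewrite RInt_lc; [|cont_tac|cont_tac].
  rewrite RInt_lc; [|cont_tac|cont_tac]. done. }
rewrite I in I'. revert A0 A1 A2 A3 I'.
set I0 := RInt (Fk tau 0 t) (-d) d. set I1 := RInt (Fk tau 1 t) (-d) d.
set I2 := RInt (Fk tau 2 t) (-d) d. set I3 := RInt (Fk tau 3 t) (-d) d.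
intros A0 A1 A2 A3 I'.
have B2 : Rabs (tau * (I2 - G tau 2 t)) <= Rabs tau * eta.
{ rewrite Rabs_mult. apply Rmult_le_compat_l. apply Rabs_pos. lra. }
have B1 : Rabs (t * (I1 - G tau 1 t)) <= Rabs t * eta.
{ rewrite Rabs_mult. apply Rmult_le_compat_l. apply Rabs_pos. lra. }
have EX : X = - (I0 - G tau 0 t) + 6 * (I3 - G tau 3 t) - 4 * (tau * (I2 - G tau 2 t)) - 2 * (t * (I1 - G tau 1 t)) + (phi tau t d - phi tau t (-d)).
{ unfold X. lra. }
rewrite EX. unfold c.
revert B1 B2 A0 A3 P1 P2.
generalize (tau * (I2 - G tau 2 t)) (t * (I1 - G tau 1 t)) (I0 - G tau 0 t) (I3 - G tau 3 t) (phi tau t d) (phi tau t (-d)).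
intros b2 b1 a0 a3 p1 p2. intros.
have := abs_lin a0 a3 b2 b1 p1 p2. have := Rabs_pos tau. have := Rabs_pos t. intros. nra.
Qed.


Lemma even_int tau t d : RInt (Fk tau 0 t) (-d) d = 2 * RInt (Fk tau 0 t) 0 d.
Proof.
have ex := exR _ (Fk_cont tau 0 t).
have H := RInt_comp_lin (Fk tau 0 t) (-1) 0 0 d (ex _ _).
replace (-1 * 0 + 0) with 0 in H by ring. replace (-1 * d + 0) with (-d) in H by ring.
rewrite (RInt_ext _ (fun y => -1 * Fk tau 0 t y + 0 * Fk tau 0 t y)) in H; last first.
{ intros x _. rewrite /scal /= /mult /=. unfold Fk. simpl. ring_simplify. f_equal. f_equal. f_equal; ring. }
rewrite RInt_lc in H; [|apply Fk_cont|apply Fk_cont].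
rewrite -(RInt_Chasles _ (-d) 0 d) //. rewrite -opp_RInt_swap // -H /plus /opp /=. ring.
Qed.

Lemma mu0_integrand_eq tau t : mu0_integrand tau t = Fk tau 0 t.
Proof. apply functional_extensionality. intro x. unfold mu0_integrand, Fk. simpl. ring. Qed.

Lemma mu0_eq tau : mu0 tau = G tau 0.
Proof. apply functional_extensionality. intro t. unfold mu0, G. rewrite mu0_integrand_eq //. Qed.

Lemma f'_cont tau t s : 0 < s -> continuous (mu0_integrand' tau t) s.
Proof. intros hs. apply: ex_derive_continuous. unfold mu0_integrand', Rpower. auto_derive. lra. Qed.

Lemma subst tau t a b : 0 < a -> a <= b ->
  RInt (mu0_integrand' tau t) a b = 2 * RInt (Fk tau 0 t) (sqrt a) (sqrt b).
Proof.
intros ha hab.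
have hsa : 0 < sqrt a by apply sqrt_lt_R0.
have hsab : sqrt a <= sqrt b by apply sqrt_le_1_alt.
have H := RInt_comp (mu0_integrand' tau t) (fun x => x^2) (fun x => 2 * x) (sqrt a) (sqrt b).
rewrite !pow2_sqrt in H; try lra.
rewrite -H.
- rewrite (RInt_ext _ (fun y => 2 * Fk tau 0 t y + 0 * Fk tau 0 t y)); last first.
  + intros x hx. rewrite Rmin_left in hx => //. rewrite Rmax_right in hx => //.
    rewrite /scal /= /mult /=. unfold mu0_integrand', Fk.
    replace (- (1/2)) with (- (/2)) by field. rewrite Rpower_Ropp Rpower_sqrt; [|nra].
    rewrite sqrt_pow2; [|lra]. simpl. field_simplify; [|lra]. f_equal. f_equal. f_equal; ring.
  + rewrite RInt_lc; [|apply Fk_cont|apply Fk_cont]. rewrite Rmult_0_l Rplus_0_r; reflexivity.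
- intros x hx. rewrite Rmin_left in hx => //. apply f'_cont. nra.
- intros x hx. split. apply is_derive_Reals. 
  replace (2 * x) with (INR 2 * x^(pred 2)) by (simpl; ring). apply derivable_pt_lim_pow.
  apply: ex_derive_continuous. auto_derive. done.
Qed.

Lemma part2 tau t : is_RInt_gen (mu0_integrand' tau t) (at_right 0) (Rbar_locally p_infty) (G tau 0 t).
Proof.
intros P [eps HP].
destruct (Fk_bound tau 0 t) as [C0 [hC0 HC0]].
destruct (G_approx tau 0 t (eps/2)) as [D [hD HD]]. { have := cond_pos eps. lra. }
have he := cond_pos eps.
set c := Rmin 1 (eps / (4 * (C0 + 1))).
have hc : 0 < c by (apply Rmin_pos; [lra| apply Rdiv_lt_0_compat; lra]).
have hc1 : c <= 1 by apply Rmin_l.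
have hc2 : c <= eps / (4 * (C0 + 1)) by apply Rmin_r.
set M := Rmax D 1.
have hM1 : 1 <= M by apply Rmax_r.
have hMD : D <= M by apply Rmax_l.
apply Filter_prod with (fun a => 0 < a /\ sqrt a < c) (fun b => M^2 < b).
- have hc2p : 0 < c^2 by nra.
  exists (mkposreal _ hc2p). intros y hy hy0. split => //.
  rewrite /ball /= /AbsRing_ball /abs /minus /plus /opp /= in hy.
  rewrite -(sqrt_pow2 c); [|lra]. apply sqrt_lt_1_alt. split; [lra|]. 
  have hy2 := Rle_abs (y + - 0). rewrite Ropp_0 Rplus_0_r in hy2 hy. lra.
- exists (M^2). done.
- intros a b [ha hsa] hb. simpl.
  have hsb : M < sqrt b. { rewrite -(sqrt_pow2 M); [|lra]. apply sqrt_lt_1_alt. split; [nra|lra]. }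
  have hsa0 : 0 < sqrt a by apply sqrt_lt_R0.
  have hab : a <= b. { have : a < 1. { rewrite -(pow2_sqrt a); [|lra]. nra. } nra. }
  exists (RInt (mu0_integrand' tau t) a b). split.
  + apply: RInt_correct. apply: (@ex_RInt_continuous R_CompleteNormedModule).
    intros z hz. rewrite Rmin_left in hz => //. apply f'_cont. lra.
  + apply HP. rewrite /ball /= /AbsRing_ball /abs /minus /plus /opp /=.
    rewrite subst //.
    have A := HD (sqrt b) ltac:(lra).
    rewrite even_int in A.
    rewrite -(RInt_Chasles _ 0 (sqrt a) (sqrt b)) in A; try apply exR, Fk_cont.
    rewrite /plus /= in A.
    have B1 : 0 <= RInt (Fk tau 0 t) 0 (sqrt a).
    { apply RInt_ge_0. lra. apply exR, Fk_cont. intros; apply Fk_ge0. }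
    have B2 : RInt (Fk tau 0 t) 0 (sqrt a) <= C0 * sqrt a.
    { apply Rle_trans with (RInt (fun _ => C0) 0 (sqrt a)).
      - apply RInt_le. lra. apply exR, Fk_cont. apply ex_RInt_const.
        intros x _. apply HC0. lra.
      - rewrite RInt_const /scal /= /mult /=. lra. }
    have B3 : 2 * (C0 * sqrt a) < eps / 2.
    { have : C0 * sqrt a <= C0 * c. { apply Rmult_le_compat_l; lra. }
      have : C0 * c <= C0 * (eps / (4 * (C0 + 1))) by (apply Rmult_le_compat_l; lra).
      have : C0 * (eps / (4 * (C0 + 1))) < eps / 4.
      { apply Rmult_lt_reg_r with (4 * (C0 + 1)). lra. field_simplify; nra. }
      lra. }
    revert A B1 B2 B3. generalize (RInt (Fk tau 0 t) 0 (sqrt a)) (RInt (Fk tau 0 t) (sqrt a) (sqrt b)).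
    intros. split_Rabs; lra.
Qed.

Theorem lemma5p1 (tau t : R) :
  ex_RInt_gen (mu0_integrand tau t) (Rbar_locally m_infty) (Rbar_locally p_infty) /\
  is_RInt_gen (mu0_integrand' tau t) (at_right 0) (Rbar_locally p_infty) (mu0 tau t) /\
  (forall k : nat, (k <= 3)%nat -> ex_derive_n (mu0 tau) k t) /\
  Derive_n (mu0 tau) 3 t - 2 / 3 * tau * Derive_n (mu0 tau) 2 t
    - 1 / 3 * t * Derive_n (mu0 tau) 1 t - 1 / 6 * mu0 tau t = 0.
Proof.
rewrite mu0_eq mu0_integrand_eq. split; [|split; [|split]].
- exists (G tau 0 t). apply G_prop.
- apply part2.
- intros k _. apply G_exn.
- rewrite !G_Dn. have := G_comb tau t. simpl. lra.
Qed.
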